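(* Let $p\geq1$ and let $A$ be a complex $r$-matrix of order $n_1\times\cdots\times n_r$. (a) For every $k\in[r]$, \[ \|A\|_p\geq\frac{1}{n_1^{1/p}\cdots n_r^{1/p}}\sum_{j\in[n_k]}\big|\Sigma A^{(k)}_j\big|.\qquad( * ) \] (b) If $A$ is nonnegative, $p>1$, and equality holds in $( * )$ for all $k\in[r]$, then $A$ is regular. (c) If $p\geq r$ and $A$ is nonnegative, then equality holds in $( * )$ for all $k\in[r]$ if and only if $A$ is regular.
   Context: An $r$-matrix of order $n_1\times\cdots\times n_r$ is a function on $[n_1]\times\cdots\times[n_r]$ with values $a_{i_1,\ldots,i_r}$. For $k\in[r]$, $j\in[n_k]$, the slice $A^{(k)}_j$ is the $(r-1)$-matrix obtained by fixing $i_k=j$; $\Sigma B$ is the sum of all entries of $B$. $A$ is regular if for every $k\in[r]$, $\Sigma A^{(k)}_1=\cdots=\Sigma A^{(k)}_{n_k}$. The spectral $p$-norm is $\|A\|_p=\max\{|\sum a_{i_1,\ldots,i_r}\overline{x^{(1)}_{i_1}}\cdots\overline{x^{(r)}_{i_r}}|:\mathbf{x}^{(k)}\in\mathbb{C}^{n_k},\ |\mathbf{x}^{(k)}|_p=1\ \forall k\}$. *)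

(* Defs.v *)
From HB Require Import structures.
From mathcomp Require Import all_boot all_order all_algebra.
From mathcomp Require Import classical_sets reals exp.
From mathcomp Require Import complex.
Set Implicit Arguments. Unset Strict Implicit. Unset Printing Implicit Defensive.
Import Order.TTheory GRing.Theory Num.Theory.
Local Open Scope ring_scope.

Definition cabs (R : realType) (z : R[i]) : R :=
  Num.sqrt (complex.Re z ^+ 2 + complex.Im z ^+ 2).

Definition idx (r : nat) (n : 'I_r -> nat) := {dffun forall k : 'I_r, 'I_(n k)}.

Definition rmatrix (R : realType) (r : nat) (n : 'I_r -> nat) := idx n -> R[i].

(* Sigma A^{(k)}_j : sum of the entries of the slice i_k = j *)
Definition slice_sum (R : realType) r (n : 'I_r -> nat) (A : rmatrix R n)
  (k : 'I_r) (j : 'I_(n k)) : R[i] :=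
  \sum_(i : idx n | i k == j) A i.
Arguments slice_sum {R r n} A k j.

Definition regular (R : realType) r (n : 'I_r -> nat) (A : rmatrix R n) : Prop :=
  forall (k : 'I_r) (j j' : 'I_(n k)), slice_sum A k j = slice_sum A k j'.

Definition nonneg_rmatrix (R : realType) r (n : 'I_r -> nat) (A : rmatrix R n) : Prop :=
  forall i, 0 <= A i.

Definition lpnorm (R : realType) (p : R) m (x : 'I_m -> R[i]) : R :=
  powR (\sum_(j < m) powR (cabs (x j)) p) (p^-1).

Definition mform (R : realType) r (n : 'I_r -> nat) (A : rmatrix R n)
  (x : forall k : 'I_r, 'I_(n k) -> R[i]) : R[i] :=
  \sum_(i : idx n) A i * \prod_(k < r) (x k (i k))^*.

(* spectral p-norm: sup (attained, hence a max) over unit vectors *)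
Definition spnorm (R : realType) (p : R) r (n : 'I_r -> nat) (A : rmatrix R n) : R :=
  reals.sup [set cabs (mform A x) | x in
     [set x : forall k : 'I_r, 'I_(n k) -> R[i] | forall k, lpnorm p (x k) = 1]]%classic.

(* right-hand side of ( * ) *)
Definition lower_bound (R : realType) (p : R) r (n : 'I_r -> nat) (A : rmatrix R n)
  (k : 'I_r) : R :=
  (\prod_(l < r) powR (n l)%:R (p^-1))^-1 * \sum_(j < n k) cabs (slice_sum A k j).

(* Main.v *)
Require Import Defs.
From HB Require Import structures.
From mathcomp Require Import all_boot all_order all_algebra.
From mathcomp Require Import classical_sets reals exp.
From mathcomp Require Import complex.
From mathcomp Require Import ring lra.
Import Order.TTheory GRing.Theory Num.Theory.
Local Open Scope ring_scope.
Section RealLemmas.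
Variable R : realType.
Implicit Types u v w s p : R.

Lemma ln_le_sub1 v : 0 < v -> ln v <= v - 1.
Proof.
move=> v0; have := @le_ln1Dx R (v - 1).
have -> : 1 + (v - 1) = v by ring.
apply; lra.
Qed.

Lemma wamgm u s : 0 <= u -> 0 <= s <= 1 -> u `^ s <= s * u + (1 - s).
Proof.
move=> u0 /andP[s0 s1].
have [->|u0'] := eqVneq u 0.
  rewrite /powR eqxx; have [->|sn0] := eqVneq s 0; first by rewrite /=; lra.
  by rewrite /=; lra.
have up : 0 < u by rewrite lt_def u0' u0.
set M := s * u + (1 - s).
have Mp : 0 < M.
  rewrite /M; have [->|s1'] := eqVneq s 1; first by lra.
  have : s < 1 by rewrite lt_neqAle s1' s1.
  have : 0 <= s * u by apply: mulr_ge0.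
  lra.
rewrite /powR (negbTE u0') -(lnK (x:=M)) ?posrE // ler_expR.
have h1 := @ln_le_sub1 (u / M) (divr_gt0 up Mp).
have h2 := @ln_le_sub1 M^-1 (ltac:(by rewrite invr_gt0)).
rewrite ln_div ?posrE // in h1.
rewrite lnV ?posrE // in h2.
have h3 : s * (ln u - ln M) <= s * (u / M - 1) by apply: ler_wpM2l.
have h4 : (1 - s) * (- ln M) <= (1 - s) * (M^-1 - 1) by apply: ler_wpM2l; lra.
have h5 : s * (u / M - 1) + (1 - s) * (M^-1 - 1) = 0.
  rewrite /M; field; rewrite -/M; exact: lt0r_neq0.
lra.
Qed.

Lemma bernoulli w p : 1 <= p -> 0 <= w -> 1 + p * (w - 1) <= w `^ p.
Proof.
move=> p1 w0.
have p0 : 0 < p by lra.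
have := @wamgm (w `^ p) p^-1 (powR_ge0 w p).
rewrite -powRrM mulfV ?gt_eqF // powRr1 //.
have hs : 0 <= p^-1 <= 1.
  by rewrite invr_ge0 ltW //= invr_le1 // ?unitfE ?gt_eqF.
move=> /(_ hs) h.
have : p * w <= p * (p^-1 * w `^ p + (1 - p^-1)) by apply: ler_wpM2l; lra.
rewrite mulrDr mulrA mulfV ?gt_eqF // mul1r mulrBr mulr1 mulfV ?gt_eqF //.
lra.
Qed.

End RealLemmas.
Section RealLemmas2.
Variable R : realType.
Implicit Types x u v w s p : R.


Lemma powRVp x p : 0 < x -> (x^-1) `^ p = (x `^ p)^-1.
Proof.
move=> x0.
have h : x `^ p * (x^-1) `^ p = 1.
  by rewrite -powRM ?invr_ge0 ?ltW // mulfV ?gt_eqF // powR1.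
have hp : x `^ p != 0 by rewrite gt_eqF // powR_gt0.
by apply: (mulfI hp); rewrite h mulfV.
Qed.

Lemma powRK x p : 0 <= x -> p != 0 -> (x `^ p^-1) `^ p = x.
Proof. by move=> x0 p0; rewrite -powRrM mulVf // powRr1. Qed.

Lemma powRKV x p : 0 <= x -> p != 0 -> (x `^ p) `^ p^-1 = x.
Proof. by move=> x0 p0; rewrite -powRrM mulfV // powRr1. Qed.

Lemma powR_gt1 x e : 1 < x -> 0 < e -> 1 < x `^ e.
Proof.
move=> x1 e0; rewrite /powR gt_eqF ?(lt_trans _ x1) // expR_gt1.
by apply: mulr_gt0 => //; apply: ln_gt0.
Qed.

Lemma powR_ltself x e : 1 < x -> e < 1 -> x `^ e < x.
Proof.
move=> x1 e1; rewrite -{2}(powRr1 (a:=x)) ?ltW ?(lt_trans _ x1) //.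
rewrite /powR gt_eqF ?(lt_trans _ x1) // ltr_expR ltr_pM2r //.
exact: ln_gt0.
Qed.

Lemma lin1 (a b d : R) : a - b <= 1 -> b < d -> a - 1 < d.
Proof. by move=> *; lra. Qed.

Lemma sum_delta m (a : 'I_m) (c : R) : \sum_(j < m) (j == a)%:R * c = c.
Proof.
rewrite (bigD1 a) //= eqxx mul1r big1 ?addr0 // => j /negbTE ->.
by rewrite mul0r.
Qed.

Lemma key_lemma m (s : 'I_m -> R) p : 1 <= p -> (forall j, 0 <= s j) ->
  (exists a b, s a != s b) ->
  exists y : 'I_m -> R, (forall j, 0 <= y j) /\ \sum_j y j `^ p = 1 /\
     (m%:R `^ p^-1)^-1 * \sum_j s j < \sum_j s j * y j.
Proof.
move=> p1 s0 [a0 [b0 hab]].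
have p0 : 0 < p by apply: lt_le_trans p1.
have pn0 : p != 0 by rewrite gt_eqF.
case: (@arg_maxP _ _ _ a0 predT s) => // a _ amax.
set S := \sum_j s j.
have sumd : \sum_j (s a - s j) = m%:R * s a - S.
  by rewrite sumrB sumr_const card_ord mulr_natl.
have Sle : S <= m%:R * s a.
  rewrite -subr_ge0 -sumd; apply: sumr_ge0 => j _; rewrite subr_ge0.
  exact: amax.
have Slt : S < m%:R * s a.
  rewrite lt_neqAle Sle andbT; apply/negP => /eqP hS.
  have h0 : \sum_j (s a - s j) = 0 by rewrite sumd hS subrr.
  have e j : s j = s a.
    apply/eqP; rewrite eq_sym -subr_eq0; apply/eqP.
    apply: (psumr_eq0P _ h0) => // i _; rewrite subr_ge0; exact: amax.
  by move/negP: hab; rewrite !e eqxx.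
have Sge0 : 0 <= S by apply: sumr_ge0.
have Sgt0 : 0 < S.
  rewrite lt_neqAle Sge0 andbT; apply/negP => /eqP hS.
  have e j : s j = 0 by apply: (psumr_eq0P _ (esym hS)).
  by move/negP: hab; rewrite !e eqxx.
have mpos : (0 < m)%N by apply: (leq_ltn_trans _ (ltn_ord a0)).
have m0 : (0 : R) < m%:R by rewrite ltr0n.
set rho := m%:R * s a / S.
have rho1 : 1 < rho by rewrite /rho ltr_pdivlMr // mul1r.
set v := rho `^ p^-1.
have v1 : 1 < v by apply: powR_gt1 => //; rewrite invr_gt0.
have v0 : 0 < v by apply: lt_trans v1.
have vp : v `^ p = rho by rewrite /v powRK // ltW // (lt_trans _ rho1).
set z := fun j : 'I_m => if j == a then v else 1.
have zp j : z j `^ p = 1 + (j == a)%:R * (rho - 1).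
  by rewrite /z; case: eqP => _; rewrite ?vp ?powR1 /=; ring.
set Z := \sum_j z j `^ p.
have ZE : Z = m%:R + (rho - 1).
  by rewrite /Z (eq_bigr _ (fun j _ => zp j)) big_split /= sum_delta sumr_const card_ord.
have Z0 : 0 < Z by rewrite ZE; apply: addr_gt0 => //; rewrite subr_gt0.
set q := s a * (v - 1).
have sz : \sum_j s j * z j = S + q.
  rewrite -(@sum_delta m a q) -big_split /=; apply: eq_bigr => j _.
  rewrite /z /q; case: eqP => [->|_] /=; ring.
set N := Z `^ p^-1.
have N0 : 0 < N by apply: powR_gt0.
have NP : N `^ p = Z by rewrite /N powRK // ltW.
exists (fun j => z j / N); split; [|split].
- move=> j; apply: divr_ge0; last exact: ltW.
  by rewrite /z; case: eqP => _ //; exact: ltW.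
- rewrite -[RHS](@mulfV _ Z) ?gt_eqF // /Z mulr_suml; apply: eq_bigr => j _.
  rewrite powRM ?invr_ge0 ?ltW //; last by rewrite /z; case: eqP => _ //; exact: ltW.
  by rewrite powRVp // NP.
- have -> : \sum_j s j * (z j / N) = (S + q) / N.
    by rewrite -sz mulr_suml; apply: eq_bigr => j _; rewrite mulrA.
  set mu := m%:R `^ p^-1.
  have mu0 : 0 < mu by apply: powR_gt0.
  have q0 : 0 <= q by rewrite /q; apply: mulr_ge0; [exact: s0 | rewrite subr_ge0 ltW].
  have qS0 : 0 <= 1 + q / S by apply: addr_ge0 => //; exact: divr_ge0.
  have bern := @bernoulli R (1 + q / S) p p1 qS0.
  have hSq : (S + q) `^ p = S `^ p * (1 + q / S) `^ p.
    rewrite -powRM; [|exact: ltW|exact: qS0].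
    by congr (_ `^ _); field; rewrite gt_eqF.
  have vi0 : 0 <= v^-1 by rewrite invr_ge0 ltW.
  have bern2 := @bernoulli R v^-1 p p1 vi0.
  rewrite powRVp // vp in bern2.
  have X1 : v^-1 * v = 1 by rewrite mulVf // gt_eqF.
  have Xlt : v^-1 < 1 by rewrite invr_lt1 ?unitfE ?gt_eqF.
  have Xgt : 0 < v^-1 by rewrite invr_gt0.
  have R1 : rho^-1 * rho = 1 by rewrite mulVf // gt_eqF // (lt_trans _ rho1).
  have hr : rho * (1 + p * (v^-1 - 1)) <= 1.
    have rho0 : 0 < rho by apply: lt_trans rho1.
    by have := ler_wpM2l (ltW rho0) bern2; rewrite mulfV // gt_eqF.
  have hq : rho - 1 < p * (v - 1) * rho.
    have e1 : p * (v - 1) * v^-1 = p * (1 - v^-1).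
      by field; rewrite gt_eqF.
    have h2 : p * (1 - v^-1) * rho < p * (v - 1) * rho.
      rewrite ltr_pM2r ?(lt_trans _ rho1) // ltr_pM2l //.
      rewrite -subr_gt0.
      have -> : v - 1 - (1 - v^-1) = (v - 1) * (1 - v^-1) by field; rewrite gt_eqF.
      by apply: mulr_gt0; rewrite subr_gt0.
    have e2 : rho * (1 + p * (v^-1 - 1)) = rho - p * (1 - v^-1) * rho by ring.
    by apply: (lin1 _ (p * (1 - v^-1) * rho)); [rewrite -e2 | exact: h2].
  have key : S `^ p * Z < (S + q) `^ p * m%:R.
    rewrite hSq -mulrA ltr_pM2l ?powR_gt0 //.
    apply: (@lt_le_trans _ _ ((1 + p * (1 + q / S - 1)) * m%:R)); last first.
      by rewrite ler_wpM2r // ltW.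
    have -> : (1 + p * (1 + q / S - 1)) * m%:R = m%:R + p * (v - 1) * rho.
      by rewrite /q /rho; field; rewrite gt_eqF.
    by rewrite ZE ltrD2l.
  have pi0 : 0 < p^-1 by rewrite invr_gt0.
  have nn1 : S `^ p * Z \is Num.nneg.
    by rewrite nnegrE; apply: mulr_ge0; [exact: powR_ge0|exact: ltW].
  have nn2 : (S + q) `^ p * m%:R \is Num.nneg.
    by rewrite nnegrE; apply: mulr_ge0; [exact: powR_ge0|exact: ltW].
  have := @gt0_ltr_powR R p^-1 pi0 _ _ nn1 nn2 key.
  rewrite !powRM ?powR_ge0 ?ltW // ?addr_ge0 // !powRKV ?ltW // ?addr_ge0 //.
  rewrite -/N -/mu => hk.
  rewrite ltr_pdivlMr // -mulrA ltr_pdivrMl //.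
  move: hk; rewrite mulrC [mu * _]mulrC; exact.
by apply: (lt_le_trans Sgt0); rewrite lerDl.
Qed.

End RealLemmas2.
Lemma amgm_r (R : realType) (m : nat) (z : 'I_m -> R) : (0 < m)%N -> (forall l, 0 <= z l) ->
  \prod_l z l <= m%:R^-1 * \sum_l z l ^+ m.
Proof.
move=> m0 z0.
have := (@leif_AGM R _ 'I_m (fun l => z l ^+ m) (fun l _ => exprn_ge0 m (z0 l))).1.
rewrite /= card_ord.
have e1 : \prod_(i in 'I_m) z i ^+ m = \prod_l z l ^+ m by apply: eq_bigl.
have e2 : \sum_(i in 'I_m) z i ^+ m = \sum_l z l ^+ m by apply: eq_bigl.
rewrite e1 e2 prodrXl mulrC ler_pXn2r // nnegrE.
  by apply: prodr_ge0 => l _.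
apply: mulr_ge0; first by rewrite invr_ge0.
by apply: sumr_ge0 => l _; exact: exprn_ge0.
Qed.

Lemma pmean (R : realType) (m : nat) (y : 'I_m -> R) (p : R) (k : nat) :
  (0 < k)%N -> k%:R <= p -> (forall j, 0 <= y j) -> \sum_j y j `^ p = 1 ->
  (m%:R `^ p^-1) ^+ k * \sum_j y j ^+ k <= m%:R.
Proof.
move=> k0 kp y0 ys.
have k0' : (0 : R) < k%:R by rewrite ltr0n.
have p0 : 0 < p by apply: lt_le_trans kp.
set s := p^-1 * k%:R.
have s0 : 0 <= s by apply: mulr_ge0; [rewrite invr_ge0 ltW | exact: ltW].
have s1 : s <= 1 by rewrite /s mulrC ler_pdivrMr // mul1r.
have s01 : 0 <= s <= 1 by rewrite s0 s1.
have ms : m%:R `^ s = (m%:R `^ p^-1) ^+ k.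
  by rewrite /s powRrM powR_mulrn // powR_ge0.
have ys' j : (y j `^ p) `^ s = y j ^+ k.
  by rewrite -powRrM /s mulrA mulfV ?gt_eqF // mul1r powR_mulrn.
have hj j : (m%:R `^ p^-1) ^+ k * y j ^+ k <= s * (m%:R * y j `^ p) + (1 - s).
  have := @wamgm R (m%:R * y j `^ p) s (mulr_ge0 (ler0n _ _) (powR_ge0 _ _)) s01.
  by rewrite powRM ?ler0n ?powR_ge0 // ms ys'.
rewrite mulr_sumr; apply: le_trans (ler_sum _ (fun j _ => hj j)) _.
rewrite big_split /= -mulr_sumr -mulr_sumr ys mulr1 sumr_const card_ord.
by rewrite -[(1 - s) *+ m]mulr_natr -mulrDl addrC subrK mul1r.
Qed.

Section ComplexPart.
Variable R : realType.
Local Notation C := (R[i]).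

Lemma cabsE (z : C) : (cabs z)%:C%C = `|z|.
Proof. by rewrite normc_def. Qed.

Lemma cabs_ge0 (z : C) : 0 <= cabs z.
Proof. exact: sqrtr_ge0. Qed.

Lemma cabs_real (c : R) : 0 <= c -> cabs c%:C%C = c.
Proof. by move=> c0; rewrite /cabs /= expr0n /= addr0 sqrtr_sqr ger0_norm. Qed.

Lemma cabs_eqC (z : C) (c : R) : `|z| = c%:C%C -> cabs z = c.
Proof. by rewrite -cabsE => /complexI. Qed.

Lemma conj_realC (c : R) : (c%:C%C)^* = c%:C%C.
Proof. by apply: conj_Creal; rewrite complex_real. Qed.

Lemma ge0_realC (z : C) : 0 <= z -> z = (complex.Re z)%:C%C /\ 0 <= complex.Re z.
Proof.
case: z => a b; rewrite lecE /= => /andP[/eqP -> a0]; split => //.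
Qed.

End ComplexPart.
Section Main.
Variable R : realType.
Local Notation C := (R[i]).
Variables (r : nat) (n : 'I_r -> nat).

Definition xsplit (k : 'I_r) (g : nat -> C) (c : 'I_r -> R) :
  forall l : 'I_r, 'I_(n l) -> C :=
  fun l j => if l == k then g (nat_of_ord j) else (c l)%:C%C.

Lemma mform_split (A : rmatrix R n) k g c :
  mform A (xsplit k g c) =
  (\prod_(l < r | l != k) (c l)%:C%C) * \sum_(j < n k) slice_sum A k j * (g j)^*.
Proof.
rewrite /mform.
have e i : \prod_(l < r) (xsplit k g c l (i l))^* =
   (g (i k))^* * \prod_(l < r | l != k) (c l)%:C%C.
  rewrite (bigD1 k) //= /xsplit eqxx; congr (_ * _).
  by apply: eq_bigr => l /negbTE ->; rewrite conj_realC.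
under eq_bigr => i _ do rewrite e mulrA.
rewrite -mulr_suml mulrC; congr (_ * _).
rewrite (partition_big (fun i : idx n => i k) predT) //=.
apply: eq_bigr => j _; rewrite /slice_sum mulr_suml.
by apply: eq_bigr => i /eqP ->.
Qed.

Lemma entry_le1 {p : R} {m} {v : 'I_m -> C} : 1 <= p -> lpnorm p v = 1 ->
  forall j, cabs (v j) <= 1.
Proof.
move=> p1 hv j.
have p0 : p != 0 by rewrite gt_eqF // (lt_le_trans _ p1).
have T1 : \sum_(j < m) cabs (v j) `^ p = 1.
  have := congr1 (fun t => t `^ p) hv; rewrite /= powR1 /lpnorm powRK //.
  by apply: sumr_ge0 => i _; exact: powR_ge0.
have hj : cabs (v j) `^ p <= 1.
  rewrite -T1 (bigD1 j) //= lerDl; apply: sumr_ge0 => i _; exact: powR_ge0.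
rewrite -(@powRKV R (cabs (v j)) p) ?cabs_ge0 //.
apply: le_trans (_ : _ <= 1 `^ p^-1) _; last by rewrite powR1.
apply: ge0_ler_powR => //.
  by rewrite invr_ge0 ltW // (lt_le_trans _ p1).
by rewrite nnegrE powR_ge0.
by rewrite nnegrE ler01.
Qed.

Definition Eset (p : R) (A : rmatrix R n) : set R :=
  [set cabs (mform A x) | x in
     [set x : forall k : 'I_r, 'I_(n k) -> C | forall k, lpnorm p (x k) = 1]]%classic.

Lemma spnormE p A : spnorm p A = reals.sup (Eset p A).
Proof. by []. Qed.

Lemma Eset_ub p A : 1 <= p -> has_ubound (Eset p A).
Proof.
move=> p1; exists (\sum_i cabs (A i)) => _ [x hx <-].
rewrite -lecR cabsE rmorph_sum /=.
apply: le_trans (ler_norm_sum _ _ _) _; apply: ler_sum => i _.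
rewrite normrM cabsE -[X in _ <= X]mulr1; apply: ler_wpM2l => //.
rewrite normr_prod; apply: le_trans (_ : \prod_(l < r) (1:C) <= 1).
  apply: ler_prod => l _; rewrite normr_ge0 /= norm_conjC -cabsE.
  have -> : (1 : C) = (1 : R)%:C%C by [].
  by rewrite lecR; exact: (entry_le1 p1 (hx l)).
by rewrite big1.
Qed.


Definition cdef (p : R) (l : 'I_r) : R := ((n l)%:R `^ p^-1)^-1.

Lemma cdef_gt0 p l : (0 < n l)%N -> 0 < cdef p l.
Proof. by move=> nl; rewrite invr_gt0 powR_gt0 // ltr0n. Qed.

Lemma cdef_powR p l : 1 <= p -> (0 < n l)%N -> cdef p l `^ p = (n l)%:R^-1.
Proof.
move=> p1 nl; rewrite /cdef powRVp ?powR_gt0 ?ltr0n // powRK //.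
by rewrite gt_eqF // (lt_le_trans _ p1).
Qed.

Lemma lp_other p k g l : 1 <= p -> (0 < n l)%N -> l != k ->
  lpnorm p (xsplit k g (cdef p) l) = 1.
Proof.
move=> p1 nl lk; rewrite /lpnorm /xsplit (negbTE lk).
under eq_bigr do rewrite cabs_real ?ltW ?cdef_gt0 //.
rewrite sumr_const card_ord cdef_powR // -[_^-1 *+ _]mulr_natl mulfV ?powR1 //.
by rewrite pnatr_eq0 -lt0n.
Qed.

Lemma lp_k p k g c l : l = k ->
  lpnorm p (xsplit k g c l) = (\sum_(j < n k) cabs (g j) `^ p) `^ p^-1.
Proof. by move=> e; subst l; rewrite /lpnorm /xsplit eqxx. Qed.

Lemma sum_insubd k (d0 : 'I_(n k)) (F : 'I_(n k) -> R) :
  \sum_(j < n k) F (insubd d0 (nat_of_ord j)) = \sum_(j < n k) F j.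
Proof. by apply: eq_bigr => j _; rewrite valKd. Qed.

Lemma lower_boundE p (A : rmatrix R n) k :
  lower_bound p A k = (\prod_(l < r) cdef p l) * \sum_(j < n k) cabs (slice_sum A k j).
Proof. by rewrite /lower_bound /cdef prodfV. Qed.

Lemma prod_cdef p k : \prod_(l < r) cdef p l =
  (\prod_(l < r | l != k) cdef p l) * cdef p k.
Proof. by rewrite (bigD1 k) //= mulrC. Qed.

Lemma witness p (A : rmatrix R n) k (npos : forall l, (0 < n l)%N) : 1 <= p ->
  exists x, (forall l, lpnorm p (x l) = 1) /\ cabs (mform A x) = lower_bound p A k.
Proof.
move=> p1.
set c := cdef p.
set S := slice_sum A k.
set u := fun j : 'I_(n k) => if S j == 0 then 1 else S j / `|S j|.
have u1 j : `|u j| = 1.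
  rewrite /u; case: eqP => [_|/eqP Sj]; first exact: normr1.
  by rewrite normrM normfV normr_id mulfV // normr_eq0.
have Su j : S j * (u j)^* = `|S j|.
  rewrite /u; case: eqP => [->|/eqP Sj]; first by rewrite mul0r normr0.
  rewrite rmorphM /= fmorphV /= (conj_Creal (normr_real _)) mulrA -normCK.
  by rewrite expr2 mulfK // normr_eq0.
set d0 := Ordinal (npos k).
set g := fun m : nat => (c k)%:C%C * u (insubd d0 m).
have cg m : cabs (g m) = c k.
  apply: cabs_eqC; rewrite normrM u1 mulr1 -cabsE cabs_real //.
  exact/ltW/cdef_gt0.
exists (xsplit k g c); split.
  move=> l; have [e|lk] := eqVneq l k; last exact: lp_other.
  rewrite lp_k //; under eq_bigr do rewrite cg.
  rewrite sumr_const card_ord cdef_powR // -[_^-1 *+ _]mulr_natl mulfV ?powR1 //.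
  by rewrite pnatr_eq0 -lt0n.
rewrite mform_split lower_boundE.
have -> : \sum_(j < n k) slice_sum A k j * (g j)^* =
          (c k)%:C%C * \sum_(j < n k) (cabs (S j))%:C%C.
  rewrite mulr_sumr; apply: eq_bigr => j _.
  rewrite /g valKd rmorphM /= conj_realC mulrCA Su cabsE //.
rewrite mulrA -rmorph_prod -rmorphM /= -rmorph_sum -rmorphM /= cabs_real.
  by rewrite (prod_cdef p k).
apply: mulr_ge0; last by apply: sumr_ge0 => j _; exact: cabs_ge0.
apply: mulr_ge0; last exact/ltW/cdef_gt0.
by apply: prodr_ge0 => l _; exact/ltW/cdef_gt0.
Qed.

Lemma b_gen p (A : rmatrix R n) (npos : forall l, (0 < n l)%N) : 1 <= p ->
  nonneg_rmatrix A ->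
  (forall k, spnorm p A = lower_bound p A k) -> regular A.
Proof.
move=> p1 hA heq k j j'.
apply/eqP/negPn/negP => hne.
set S := slice_sum A k.
have S0 i : 0 <= S i by apply: sumr_ge0 => t _; exact: hA.
set s := fun i => complex.Re (S i).
have SE i : S i = (s i)%:C%C by case: (@ge0_realC R _ (S0 i)).
have s0 i : 0 <= s i by case: (@ge0_realC R _ (S0 i)).
have hne' : exists a b, s a != s b.
  by exists j, j'; apply: contra hne => /eqP e; rewrite -/S !SE e.
have [y [y0 [ysum ylt]]] := @key_lemma R (n k) s p p1 s0 hne'.
set d0 := Ordinal (npos k).
set g := fun m : nat => (y (insubd d0 m))%:C%C.
set x := xsplit k g (cdef p).
have xin l : lpnorm p (x l) = 1.
  have [e|lk] := eqVneq l k; last exact: lp_other.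
  rewrite /x lp_k //.
  rewrite (eq_bigr (fun j : 'I_(n k) => y (insubd d0 j) `^ p)); last by move=> i _; rewrite /g cabs_real.
  by rewrite (sum_insubd k d0 (fun i => y i `^ p)) ysum powR1.
have P0 : 0 < \prod_(l < r | l != k) cdef p l.
  by apply: prodr_gt0 => l _; exact: cdef_gt0.
have hm : cabs (mform A x) = (\prod_(l < r | l != k) cdef p l) * \sum_j s j * y j.
  rewrite mform_split.
  have -> : \sum_(j < n k) slice_sum A k j * (g j)^* = (\sum_j s j * y j)%:C%C.
    rewrite rmorph_sum; apply: eq_bigr => i _.
    by rewrite /g valKd conj_realC -/S SE rmorphM.
  rewrite -rmorph_prod -rmorphM cabs_real //.
  apply: mulr_ge0; first exact: ltW.
  by apply: sumr_ge0 => i _; apply: mulr_ge0.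
have hlb : lower_bound p A k =
    (\prod_(l < r | l != k) cdef p l) * (cdef p k * \sum_j s j).
  rewrite lower_boundE (prod_cdef p k) -mulrA; congr (_ * (_ * _)).
  by apply: eq_bigr => i _; rewrite -/S SE cabs_real.
have : lower_bound p A k < spnorm p A.
  apply: (@lt_le_trans _ _ (cabs (mform A x))).
    by rewrite hlb hm ltr_pM2l.
  rewrite spnormE; apply: ub_le_sup; first exact: Eset_ub.
  by exists x.
by rewrite (heq k) ltxx.
Qed.

Lemma lp_sum1 (p : R) m (v : 'I_m -> C) : 1 <= p -> lpnorm p v = 1 ->
  \sum_(j < m) cabs (v j) `^ p = 1.
Proof.
move=> p1 hv.
have p0 : p != 0 by rewrite gt_eqF // (lt_le_trans _ p1).
have := congr1 (fun t => t `^ p) hv; rewrite /= powR1 /lpnorm powRK //.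
by apply: sumr_ge0 => i _; exact: powR_ge0.
Qed.

Lemma ub_regular p (A : rmatrix R n) (npos : forall l, (0 < n l)%N) (k0 : 'I_r) :
  1 <= p -> r%:R <= p -> nonneg_rmatrix A -> regular A ->
  forall x : forall k : 'I_r, 'I_(n k) -> C, (forall l, lpnorm p (x l) = 1) ->
  cabs (mform A x) <= lower_bound p A k0.
Proof.
move=> p1 rp hA reg x hx.
have r0 : (0 < r)%N by apply: leq_ltn_trans (ltn_ord k0).
set a := fun i => complex.Re (A i).
have AE i : A i = (a i)%:C%C by case: (@ge0_realC R _ (hA i)).
have a0 i : 0 <= a i by case: (@ge0_realC R _ (hA i)).
set T := \sum_i a i.
set sl := fun (l : 'I_r) (j : 'I_(n l)) => \sum_(i : idx n | i l == j) a i.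
have sliceE l j : slice_sum A l j = (sl l j)%:C%C.
  by rewrite /slice_sum rmorph_sum; apply: eq_bigr => i _; rewrite AE.
have sum_sl l : \sum_(j < n l) sl l j = T.
  by rewrite /T (partition_big (fun i : idx n => i l) predT).
have slE l j : sl l j = T / (n l)%:R.
  set j0 := Ordinal (npos l).
  have e j' : sl l j' = sl l j0.
    by apply: (@complexI R); rewrite -!sliceE; exact: reg.
  have : T = (n l)%:R * sl l j0.
    by rewrite -(sum_sl l) (eq_bigr _ (fun j' _ => e j')) sumr_const card_ord mulr_natl.
  move=> ->; rewrite e mulrC mulKf // pnatr_eq0 -lt0n; exact: npos.
have T0 : 0 <= T by apply: sumr_ge0.
have hlb : lower_bound p A k0 = (\prod_(l < r) cdef p l) * T.
  rewrite lower_boundE -(sum_sl k0); congr (_ * _).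
  apply: eq_bigr => j _; rewrite sliceE cabs_real //.
  by apply: sumr_ge0.
set y := fun (l : 'I_r) (j : 'I_(n l)) => cabs (x l j).
have y0 l j : 0 <= y l j by exact: cabs_ge0.
have st1 : cabs (mform A x) <= \sum_i a i * \prod_(l < r) y l (i l).
  rewrite -lecR cabsE rmorph_sum /=.
  apply: le_trans (ler_norm_sum _ _ _) _; apply: ler_sum => i _.
  rewrite normrM normr_prod AE -cabsE cabs_real // rmorphM rmorph_prod /=.
  apply: ler_wpM2l; first by rewrite lecR.
  by rewrite le_eqVlt; apply/orP; left; apply/eqP; apply: eq_bigr => l _;
    rewrite norm_conjC -cabsE.
set d := fun l : 'I_r => (n l)%:R `^ p^-1.
have d0 l : 0 < d l by apply: powR_gt0; rewrite ltr0n.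
set D := \prod_(l < r) d l.
have D0 : 0 < D by apply: prodr_gt0 => l _.
have hl l : \sum_i a i * (d l * y l (i l)) ^+ r <= T.
  have e : \sum_i a i * (d l * y l (i l)) ^+ r = \sum_j sl l j * (d l * y l j) ^+ r.
    rewrite (partition_big (fun i : idx n => i l) predT) //=; apply: eq_bigr => j _.
    by rewrite /sl mulr_suml; apply: eq_bigr => i /eqP ->.
  rewrite e; under eq_bigr do rewrite slE exprMn mulrA.
  rewrite -mulr_sumr -mulrA.
  have pm := @pmean R _ (y l) p r r0 rp (y0 l) (lp_sum1 _ _ _ p1 (hx l)).
  apply: le_trans (ler_wpM2l _ pm) _; first by apply: divr_ge0.
  by rewrite divfK // pnatr_eq0 -lt0n.
have st2 : D * \sum_i a i * \prod_(l < r) y l (i l) <= T.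
  rewrite mulr_sumr.
  apply: (@le_trans _ _ (\sum_i a i * (r%:R^-1 * \sum_l (d l * y l (i l)) ^+ r))).
    apply: ler_sum => i _; rewrite mulrCA; apply: ler_wpM2l => //.
    rewrite -big_split /=; apply: amgm_r => // l; apply: mulr_ge0 => //; exact: ltW.
  under eq_bigr => i _ do rewrite mulrCA mulr_sumr.
  rewrite -mulr_sumr exchange_big /=.
  apply: le_trans (ler_wpM2l _ (ler_sum _ (fun l _ => hl l))) _.
    by rewrite invr_ge0.
  rewrite sumr_const card_ord -[T *+ r]mulr_natr mulrCA mulVf ?mulr1 //.
  by rewrite pnatr_eq0 -lt0n.
apply: le_trans st1 _; rewrite hlb /cdef prodfV -/D.
by rewrite -(ler_pM2l D0) mulrA mulfV ?gt_eqF // mul1r.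
Qed.
End Main.

Theorem theorem21 (R : realType) (p : R) (r : nat) (n : 'I_r -> nat)
  (npos : forall k, (0 < n k)%N) (hp : 1 <= p) (A : rmatrix R n) :
  (* (a) *)
  (forall k : 'I_r, lower_bound p A k <= spnorm p A) /\
  (* (b) *)
  (nonneg_rmatrix A -> 1 < p ->
     (forall k : 'I_r, spnorm p A = lower_bound p A k) -> regular A) /\
  (* (c) *)
  (r%:R <= p -> nonneg_rmatrix A ->
     ((forall k : 'I_r, spnorm p A = lower_bound p A k) <-> regular A)).
Proof.
have parta : forall k : 'I_r, lower_bound p A k <= spnorm p A.
  move=> k; have [x [hx hm]] := @witness _ _ _ p A k npos hp.
  rewrite -hm spnormE; apply: ub_le_sup; first exact: Eset_ub.
  by exists x.
split; first exact: parta.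
split.
  by move=> hA _ heq; exact: (@b_gen _ _ _ p A npos hp hA heq).
move=> hr hA; split; first by move=> heq; exact: (@b_gen _ _ _ p A npos hp hA heq).
move=> reg k; apply/eqP; rewrite eq_le parta andbT.
rewrite spnormE; apply: ge_sup.
  have [x [hx _]] := @witness _ _ _ p A k npos hp.
  by exists (cabs (mform A x)), x.
move=> _ [x hx <-]; exact: (@ub_regular _ _ _ p A npos k hp hr hA reg x hx).
Qed.
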